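(* Let $\mathcal A\in\mathbb R^{n_1}\otimes\cdots\otimes\mathbb R^{n_k}$, $1\le s\le k$, $2\le r\le\min\{n_1,\dots,n_s\}$. Let $U=(U^{(1)},\dots,U^{(k)})\in\mathrm V(r,n_1)\times\cdots\times\mathrm V(r,n_s)\times\mathrm B(r,n_{s+1})\times\cdots\times\mathrm B(r,n_k)$ be a KKT point of $\mathrm{mLRPOTA}(r)$ and let $1\le j\le r$. Let $\hat U=(\hat U^{(1)},\dots,\hat U^{(k)})\in\mathrm V(r-1,n_1)\times\cdots\times\mathrm V(r-1,n_s)\times\mathrm B(r-1,n_{s+1})\times\cdots\times\mathrm B(r-1,n_k)$, where $\hat U^{(i)}$ is obtained from $U^{(i)}$ by deleting its $j$-th column. If $\lambda_j(U)=0$, then $\hat U$ is a KKT point of $\mathrm{mLRPOTA}(r-1)$.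
   Context: $\mathrm V(t,n)=\{U\in\mathbb R^{n\times t}:U^{\mathsf T}U=I_t\}$; $\mathrm B(t,n)$: $n\times t$ real matrices with unit columns. For $U=(U^{(1)},\dots,U^{(k)})$, $U^{(i)}\in\mathbb R^{n_i\times t}$ with columns $\mathbf u^{(i)}_j$: $\lambda_j(U)=\langle\mathcal A,\mathbf u^{(1)}_j\otimes\cdots\otimes\mathbf u^{(k)}_j\rangle$; $\mathbf v^{(i)}_j\in\mathbb R^{n_i}$ is the contraction of $\mathcal A$ with $\mathbf u^{(l)}_j$ for all $l\ne i$; $V^{(i)}=[\mathbf v^{(i)}_1,\dots,\mathbf v^{(i)}_t]$; $\Lambda=\operatorname{diag}(\lambda_1(U),\dots,\lambda_t(U))$. Problem $\mathrm{mLRPOTA}(t)$: maximize $\sum_{j=1}^t\lambda_j(U)^2$ over $\mathrm V(t,n_1)\times\cdots\times\mathrm V(t,n_s)\times\mathrm B(t,n_{s+1})\times\cdots\times\mathrm B(t,n_k)$. A feasible $U$ is a KKT point iff there exist symmetric $P_1,\dots,P_s\in\mathbb R^{t\times t}$ and $\mathbf p\in\mathbb R^t$ with $V^{(i)}\Lambda=U^{(i)}P_i$ ($i\le s$) and $V^{(i)}\Lambda=U^{(i)}\operatorname{diag}(\mathbf p)$ ($i>s$) (the Lagrange/KKT conditions of the problem). *)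

(* Defs.v *)
From HB Require Import structures.
From mathcomp Require Import all_boot all_order all_algebra.
From mathcomp Require Import reals.
Set Implicit Arguments. Unset Strict Implicit. Unset Printing Implicit Defensive.
Import Order.TTheory GRing.Theory Num.Theory.
Local Open Scope ring_scope.

Section Defs.
Variable R : realType.
Variable k : nat.
Variable n : 'I_k -> nat.

Definition multi_index := {dffun forall i : 'I_k, 'I_(n i)}.
Definition tensor := multi_index -> R.

Variable t : nat.
Definition factors := forall i : 'I_k, 'M[R]_(n i, t).

(* lambda_j(U) = <A, u^(1)_j (x) ... (x) u^(k)_j> *)
Definition lambda (A : tensor) (U : factors) (j : 'I_t) : R :=
  \sum_(x : multi_index) A x * \prod_(l < k) U l (x l) j.

Definition vcontr (A : tensor) (U : factors) (i : 'I_k) (j : 'I_t) (a : 'I_(n i)) : R :=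
  \sum_(x : multi_index | x i == a) A x * \prod_(l < k | l != i) U l (x l) j.

Definition Vmat (A : tensor) (U : factors) (i0 : 'I_k) : 'M[R]_(n i0, t) :=
  \matrix_(a < n i0, j < t) @vcontr A U i0 j a.

Definition Lambda (A : tensor) (U : factors) : 'M[R]_t :=
  diag_mx (\row_j lambda A U j).

Definition stiefel m (M : 'M[R]_(m, t)) : Prop := M^T *m M = 1%:M.
Definition unit_cols m (M : 'M[R]_(m, t)) : Prop :=
  forall j : 'I_t, \sum_(a < m) M a j ^+ 2 = 1.

(* feasible set of mLRPOTA(t): the first s factors (0-based indices < s)
   are in Stiefel manifolds, the remaining ones have unit columns *)
Definition feasible (s : nat) (U : factors) : Prop :=
  (forall i : 'I_k, (i < s)%N -> stiefel (U i)) /\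
  (forall i : 'I_k, (s <= i)%N -> unit_cols (U i)).

Definition KKT_point (A : tensor) (s : nat) (U : factors) : Prop :=
  feasible s U /\
  (exists P : forall i : 'I_k, 'M[R]_t,
      forall i : 'I_k, (i < s)%N ->
        (P i)^T = P i /\ Vmat A U i *m Lambda A U = U i *m P i) /\
  (exists p : 'rV[R]_t,
      forall i : 'I_k, (s <= i)%N ->
        Vmat A U i *m Lambda A U = U i *m diag_mx p).

End Defs.

Definition delete_col (R : realType) k (n : 'I_k -> nat) (r : nat)
  (U : factors R n r) (j : 'I_r) : factors R n r.-1 :=
  fun i => col' j (U i).

(* Main.v *)
Require Import Defs.
From mathcomp Require Import all_boot all_order all_algebra.
From mathcomp Require Import reals.
Set Implicit Arguments. Unset Strict Implicit. Unset Printing Implicit Defensive.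
Import Order.TTheory GRing.Theory Num.Theory.
Local Open Scope ring_scope.

Section Aux.
Variables (R : realType) (k : nat) (n : 'I_k -> nat) (r : nat).
Variables (A : tensor R n) (U : factors R n r) (j : 'I_r).

Lemma lambda_del c : lambda A (delete_col U j) c = lambda A U (lift j c).
Proof.
rewrite /lambda; apply: eq_bigr => x _; congr (_ * _).
by apply: eq_bigr => l _; rewrite /delete_col mxE.
Qed.

Lemma VL_del i a c :
  (Vmat A (delete_col U j) i *m Lambda A (delete_col U j)) a c =
  (Vmat A U i *m Lambda A U) a (lift j c).
Proof.
rewrite /Lambda !mul_mx_diag !mxE lambda_del; congr (_ * _).
rewrite /vcontr; apply: eq_bigr => x _; congr (_ * _).
by apply: eq_bigr => l _; rewrite /delete_col mxE.
Qed.

End Aux.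

Theorem proposition4p3 (R : realType) (k : nat) (n : 'I_k -> nat)
  (A : tensor R n) (s r : nat)
  (hs1 : (1 <= s)%N) (hsk : (s <= k)%N) (hr2 : (2 <= r)%N)
  (hrn : forall i : 'I_k, (i < s)%N -> (r <= n i)%N)
  (U : factors R n r) (j : 'I_r) :
  KKT_point A s U -> lambda A U j = 0 ->
  KKT_point A s (delete_col U j).
Proof.
move=> [[HSt HUc] [[P HP] [p Hp]]] Hl.
split; [split|split].
- move=> i Hi; have := HSt i Hi; rewrite /stiefel => H.
  apply/matrixP => c d; rewrite !mxE.
  move/matrixP: H => /(_ (lift j c) (lift j d)); rewrite !mxE (inj_eq (@lift_inj _ j)) => <-.
  by apply: eq_bigr => a _; rewrite /delete_col !mxE.
- move=> i Hi c; rewrite -(HUc i Hi (lift j c)).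
  by apply: eq_bigr => a _; rewrite /delete_col !mxE.
- exists (fun i => \matrix_(c, d) P i (lift j c) (lift j d)) => i Hi.
  have [HPs HPe] := HP i Hi.
  have Pcol : forall m, P i m j = 0.
    have HS := HSt i Hi.
    have H0 : (U i *m P i) *m delta_mx j (ord0 : 'I_1) = 0 :> 'M_(n i, 1).
      rewrite -HPe; apply/matrixP => a b; rewrite !mxE.
      apply: big1 => d _; rewrite /Lambda mul_mx_diag !mxE.
      case: (eqVneq d j) => [->|nd]; first by rewrite Hl !mulr0 mul0r.
      by rewrite /= mulr0.
    move=> m.
    have := congr1 (fun M : 'M_(n i, 1) => ((U i)^T *m M) m ord0) H0.
    rewrite /= mulmx0 !mulmxA HS mul1mx => H1; move: H1; rewrite !mxE => H1; rewrite -H1.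
    rewrite (bigD1 j) //= /delta_mx !mxE !eqxx mulr1 big1 ?addr0 //.
    by move=> d nd; rewrite /delta_mx !mxE (negbTE nd) mulr0.
  split.
    apply/matrixP => c d; rewrite !mxE.
    by move/matrixP: (HPs) => /(_ (lift j d) (lift j c)); rewrite mxE.
  apply/matrixP => a c; rewrite VL_del HPe !mxE (bigD1_ord j) //=.
  have -> : P i j (lift j c) = 0.
    by move/matrixP: (HPs) => /(_ (lift j c) j); rewrite mxE Pcol => <-.
  rewrite mulr0 add0r; apply: eq_bigr => d _; by rewrite /delete_col !mxE.
- exists (\row_c p 0 (lift j c)) => i Hi.
  apply/matrixP => a c; rewrite VL_del Hp // !mul_mx_diag !mxE.
  exact: erefl.
Qed.
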